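(* For every $2$-colorable oriented graph $H$ there is a bipartite tournament that forces $H$.
   Context: An oriented graph is a directed graph without loops with at most one edge between any two distinct vertices; it is $2$-colorable if its vertex set can be partitioned into $2$ sets each inducing an acyclic digraph. A bipartite tournament $F=(M\cup N,E)$ is an orientation of a complete bipartite graph with sides $M,N$. A completion of $F$ is any tournament on $V(F)$ agreeing with $F$ on the edges between $M$ and $N$. $F$ forces $H$ if every completion of $F$ contains a (not necessarily induced) copy of $H$. *)

(* Defs.v *)
From mathcomp Require Import all_boot.
Set Implicit Arguments. Unset Strict Implicit. Unset Printing Implicit Defensive.

Definition oriented (V : finType) (e : rel V) : Prop :=
  (forall x, ~~ e x x) /\ (forall x y, e x y -> ~~ e y x).

Definition acyclic_on (V : finType) (e : rel V) (S : {set V}) : Prop :=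
  forall (x : V) (p : seq V),
    x \in S -> all (fun y => y \in S) p -> path e x p -> last x p = x -> p = [::].

Definition two_colorable (V : finType) (e : rel V) : Prop :=
  exists A : {set V}, acyclic_on e A /\ acyclic_on e (~: A).

Definition tournament (V : finType) (t : rel V) : Prop :=
  (forall x, ~~ t x x) /\ (forall x y, x != y -> (t x y (+) t y x)).

Definition bip_tournament (V : finType) (M : {set V}) (f : rel V) : Prop :=
  (forall x y, f x y -> (x \in M) != (y \in M)) /\
  (forall x y, x \in M -> y \notin M -> (f x y (+) f y x)).

Definition completion (V : finType) (M : {set V}) (f t : rel V) : Prop :=
  tournament t /\
  (forall x y, (x \in M) != (y \in M) -> t x y = f x y).

(* t contains a (not necessarily induced) copy of H = (W, h) *)
Definition contains_copy (V W : finType) (t : rel V) (h : rel W) : Prop :=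
  exists phi : W -> V, injective phi /\ (forall u v, h u v -> t (phi u) (phi v)).

Definition forces (V W : finType) (M : {set V}) (f : rel V) (h : rel W) : Prop :=
  forall t : rel V, completion M f t -> contains_copy t h.

(* Main.v *)
Require Import Defs.
From mathcomp Require Import all_boot zify.
Set Implicit Arguments. Unset Strict Implicit. Unset Printing Implicit Defensive.

Lemma TT (T : finType) (t : rel T) (tot : forall x y, x != y -> t x y || t y x) n :
  forall S : {set T}, 2 ^ n <= #|S| ->
  exists s : seq T, [/\ size s = n, uniq s, pairwise t s & {subset s <= S}].
Proof.
elim: n => [|n IH] S hS; first by exists [::].
have : 0 < #|S| by apply: leq_trans hS; rewrite expn_gt0.
case/card_gt0P => x xS.
set S' := S :\ x.
set P := [set y | t x y].
have hS' : #|S| = #|S'|.+1 by rewrite (cardsD1 x S) xS.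
have hc := cardsID P S'.
have [hO|hI] : 2^n <= #|S' :&: P| \/ 2^n <= #|S' :\: P|.
  rewrite expnS in hS; lia.
- have [s [sz us ps ss]] := IH _ hO. exists (x :: s). split.
  + by rewrite /= sz.
  + rewrite /= us andbT; apply/negP => xs; move: (ss _ xs); rewrite !inE eqxx.
    by [].
  + rewrite /= ps andbT; apply/allP => y ys; move: (ss _ ys); rewrite !inE.
    by case/andP.
  + move=> y; rewrite inE => /orP[/eqP->//|ys]; move: (ss _ ys); rewrite !inE.
    by case/andP => /andP[].
- have [s [sz us ps ss]] := IH _ hI. exists (rcons s x). split.
  + by rewrite size_rcons sz.
  + rewrite rcons_uniq us andbT; apply/negP => xs; move: (ss _ xs); rewrite !inE eqxx.
    by case/and3P.
  + rewrite (@pairwise_rcons _ t) ps andbT; apply/allP => y ys; move: (ss _ ys); rewrite !inE.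
    case/and3P => nt yx _. have := tot x y. rewrite eq_sym yx => /(_ isT).
    by rewrite (negbTE nt).
  + move=> y; rewrite mem_rcons inE => /orP[/eqP->//|ys]; move: (ss _ ys); rewrite !inE.
    by case/and3P.
Qed.

Lemma extract (T : finType) (t : rel T) (tot : forall x y, x != y -> t x y || t y x)
  (I : eqType) (L : nat) (rs : seq I) :
  forall S : {set T}, size rs * 2 ^ L <= #|S| ->
  exists Tf : I -> seq T,
    (forall r, r \in rs -> [/\ size (Tf r) = L, uniq (Tf r), pairwise t (Tf r) & {subset Tf r <= S}]) /\
    (forall r r', r \in rs -> r' \in rs -> r != r' -> forall x, x \in Tf r -> x \notin Tf r').
Proof.
elim: rs => [|r rs IH] S hS; first by exists (fun _ => [::]).
have h1 : 2 ^ L <= #|S| by apply: leq_trans hS; rewrite /= mulSn leq_addr.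
have [s [sz us ps ss]] := @TT T t tot L S h1.
set B := [set x in s].
have hB : #|S :&: B| <= L.
  rewrite -sz -(card_uniqP us). apply: leq_trans (subset_leq_card (subsetIr _ _)) _.
  by rewrite /B cardsE.
have hc := cardsID B S.
have hL : L < 2 ^ L by apply: ltn_expl.
have hS' : size rs * 2 ^ L <= #|S :\: B| by move: hS; rewrite /= mulSn; lia.
have [Tf [H1 H2]] := IH _ hS'.
exists (fun r' => if r' == r then s else Tf r'); split.
- move=> r'; rewrite inE; case: eqP => [-> _|ne /= r'rs]; first by split.
  have [a b c d] := H1 _ r'rs; split => // x /d; rewrite inE; by case/andP.
- move=> r1 r2 h1r h2r ne x.
  have sub : forall r', r' \in rs -> {subset Tf r' <= S :\: B} by move=> r' /H1 [].
  case: (eqVneq r1 r) => [e1|n1]; case: (eqVneq r2 r) => [e2|n2].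
  + by move: ne; rewrite e1 e2 eqxx.
  + move: h2r; rewrite inE (negbTE n2) /= => h2r xs.
    apply/negP => /(sub _ h2r); rewrite !inE xs. by [].
  + move: h1r; rewrite inE (negbTE n1) /= => h1r /(sub _ h1r).
    rewrite !inE => /andP[/negP nx _]; exact/negP.
  + move: h1r h2r; rewrite !inE (negbTE n1) (negbTE n2) /=.
    move=> a b; exact: (H2 r1 r2 a b ne x).
Qed.

Definition eS (W : finType) (h : rel W) (S : {set W}) : rel W :=
  [rel x y | [&& x \in S, y \in S & h x y]].
Definition predp (W : finType) (h : rel W) (S : {set W}) (v : W) : {set W} :=
  [set w | [exists z, eS h S w z && connect (eS h S) z v]].

Lemma path_in (W : finType) (h : rel W) (S : {set W}) x p :
  path (eS h S) x p -> all (fun y => y \in S) p.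
Proof.
elim: p x => [|y p IH] x //= /andP[/and3P[_ yS _] pp].
by rewrite yS (IH y pp).
Qed.

Lemma rk_lt (W : finType) (h : rel W) (S : {set W}) u v :
  acyclic_on h S -> u \in S -> v \in S -> h u v ->
  #|predp h S u| < #|predp h S v|.
Proof.
move=> ac uS vS huv.
have euv : eS h S u v by rewrite /eS /= uS vS huv.
apply: proper_card; apply/properP; split.
- apply/subsetP => w; rewrite !inE => /existsP[z /andP[ewz czu]].
  apply/existsP; exists z; rewrite ewz /=.
  by apply: connect_trans czu (connect1 euv).
- exists u; first by rewrite inE; apply/existsP; exists v; rewrite euv connect0.
  rewrite inE; apply/negP => /existsP[z /andP[euz /connectP[p pz ul]]].
  have := ac u (z :: p) uS.
  have zS : z \in S by move: euz; rewrite /eS /= => /and3P[].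
  have sub : subrel (eS h S) h by move=> a b; rewrite /eS /= => /and3P[].
  rewrite /= zS (path_in pz) (sub _ _ euz) (sub_path sub pz) -ul => /(_ isT isT erefl). by [].
Qed.

Notation VM L := 'I_((2 ^ L) ^ L * 2 ^ L).
Notation VN L := ({set VM L} * 'I_(2 ^ L))%type.
Notation VV L := (VM L + VN L)%type.
Definition isl (L : nat) (x : VV L) : bool := if x is inl _ then true else false.
Definition MM (L : nat) : {set VV L} := [set x | isl x].
Definition ff (L : nat) : rel (VV L) := fun x y =>
  match x, y with
  | inl a, inr b => a \in b.1
  | inr b, inl a => a \notin b.1
  | _, _ => false
  end.

Lemma bipMM L : bip_tournament (MM L) (@ff L).
Proof.
split.
- by case=> [a|b] [a'|b']; rewrite /MM !inE.
- case=> [a|b] [a'|b']; rewrite /MM !inE //= => _ _; by case: (a \in b'.1).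
Qed.

Theorem lemma3p4 (W : finType) (h : rel W) :
  oriented h -> two_colorable h ->
  exists (V : finType) (M : {set V}) (f : rel V),
    bip_tournament M f /\ forces M f h.
Proof.
move=> [hirr hanti] [A [acA acB]].
set n := #|W|. set L := n * n + n.
pose side u := if u \in A then A else ~:A.
pose pos u := #|predp h (side u) u| * n + enum_rank u.
have posL : forall u, pos u < L.
  move=> u; have h1 : #|predp h (side u) u| <= n by apply: max_card.
  have h2 : enum_rank u < n by [].
  rewrite /pos /L; nia.
have posI : injective pos.
  move=> u u' e. have : pos u = pos u' %[mod n] by rewrite e.
  rewrite /pos !modnMDl !modn_small //.
  by move=> /ord_inj /enum_rank_inj.
have posA : forall u v, u \in A -> v \in A -> h u v -> pos u < pos v.
  move=> u v uA vA huv. have := rk_lt acA uA vA huv.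
  rewrite /pos /side uA vA => lt.
  have h2 : enum_rank u < n by [].
  nia.
have posB : forall u v, u \notin A -> v \notin A -> h u v -> pos u < pos v.
  move=> u v uA vA huv. have := @rk_lt _ h (~: A) u v acB.
  rewrite !inE uA vA => /(_ isT isT huv).
  rewrite /pos /side (negbTE uA) (negbTE vA) => lt.
  have h2 : enum_rank u < n by [].
  nia.
exists (VV L), (MM L), (@ff L); split; first exact: bipMM.
move=> t [[tirr ttot] tag].
pose tM := fun a b : VM L => t (inl a) (inl b).
have totM : forall x y, x != y -> tM x y || tM y x.
  move=> x y ne; have := ttot (inl x) (inl y).
  rewrite /tM; case: (t (inl x) (inl y)) => //=; case: (t (inl y) (inl x)) => //=.
  by move=> /(_ ne).
pose Ix := {ffun 'I_L -> 'I_(2 ^ L)}.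
have hsz : size (enum Ix) * 2 ^ L <= #|[set: VM L]|.
  by rewrite cardsT card_ord -cardE card_ffun !card_ord.
have [Tf [H1 H2]] := @extract _ tM totM Ix L (enum Ix) setT hsz.
have x0 : VM L by exists 0; rewrite muln_gt0 !expn_gt0.
pose D (a j : nat) := [exists u, exists u', [&& u \in A, u' \notin A, pos u == a, pos u' == j & h u u']].
pose v (i : 'I_(2 ^ L)) : VN L := ([set x | [exists r : Ix, [exists a : 'I_L, [exists j : 'I_L,
   [&& x == nth x0 (Tf r) a, r j == i & D a j]]]]], i).
have vinj : injective v by move=> i i' [].
pose tN := fun y y' : VN L => t (inr y) (inr y').
have totN : forall x y, x != y -> tN x y || tN y x.
  move=> x y ne; have := ttot (inr x) (inr y).
  rewrite /tN; case: (t (inr x) (inr y)) => //=; case: (t (inr y) (inr x)) => //=.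
  by move=> /(_ ne).
have hsz2 : 2 ^ L <= #|v @: setT| by rewrite card_imset // cardsT card_ord.
have [w [sw uw pw ssw]] := @TT _ tN totN L (v @: setT) hsz2.
have i0 : 'I_(2 ^ L) by exists 0; rewrite expn_gt0.
pose r : Ix := [ffun j : 'I_L => (nth (v i0) w j).2].
have wv : forall j : 'I_L, nth (v i0) w j = v (r j).
  move=> j; have : nth (v i0) w j \in v @: setT by apply: ssw; rewrite mem_nth // sw.
  by case/imsetP => i _ e; rewrite ffunE e.
have [sT uT pT _] := H1 r (mem_enum _ _).
pose phi u := if u \in A then inl (nth x0 (Tf r) (pos u)) : VV L
              else inr (nth (v i0) w (pos u)).
exists phi; split.
- move=> u u'; rewrite /phi; case: ifP => uA; case: ifP => u'A // [].
  + move/eqP; rewrite nth_uniq ?sT ?posL //; by move/eqP/posI.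
  + move/eqP; rewrite nth_uniq ?sw ?posL //; by move/eqP/posI.
- move=> u u' huu'; rewrite /phi.
  have inM : forall a : VM L, (inl a : VV L) \in MM L by move=> a; rewrite inE.
  have ninM : forall b : VN L, (inr b : VV L) \notin MM L by move=> b; rewrite inE.
  case: (boolP (u \in A)) => uA; case: (boolP (u' \in A)) => u'A.
  + have := posA _ _ uA u'A huu'.
    by move/pairwiseP: pT => /(_ x0 (pos u) (pos u')); rewrite !inE sT !posL; apply.
  + rewrite tag; last by rewrite inM (negbTE (ninM _)).
    rewrite /= (wv (Ordinal (posL u'))) inE.
    apply/existsP; exists r; apply/existsP; exists (Ordinal (posL u));
      apply/existsP; exists (Ordinal (posL u')); rewrite /= !eqxx /=.
    by rewrite /D; apply/existsP; exists u; apply/existsP; exists u'; rewrite uA u'A !eqxx huu'.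
  + rewrite tag; last by rewrite inM (negbTE (ninM _)).
    rewrite /= (wv (Ordinal (posL u))) inE.
    apply/negP => /existsP[r' /existsP[a /existsP[j /and3P[/eqP ex /eqP erj hD]]]].
    have xT : nth x0 (Tf r) (pos u') \in Tf r by rewrite mem_nth // sT posL.
    have rr : r' = r.
      apply/eqP; apply/negPn/negP => ne.
      have [sT' _ _ _] := H1 r' (mem_enum _ _).
      have := H2 r' r (mem_enum _ _) (mem_enum _ _) ne (nth x0 (Tf r') a).
      have ha : nth x0 (Tf r') a \in Tf r' by rewrite mem_nth // sT'.
      by move/(_ ha); rewrite -ex xT.
    subst r'.
    have ea : pos u' = a.
      apply/eqP; rewrite -(nth_uniq x0 _ _ uT) ?sT ?posL //; exact/eqP.
    have ej : pos u = j.
      have := congr1 v erj; rewrite -!wv /= => /eqP.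
      by rewrite nth_uniq ?sw ?posL // => /eqP.
    move: hD; rewrite /D => /existsP[u1 /existsP[u2 /and5P[_ _ /eqP e1 /eqP e2 h12]]].
    move: e1 e2 h12; rewrite -ea -ej => /posI -> /posI ->.
    by move=> h12; move: (hanti _ _ huu'); rewrite h12.
  + have := posB _ _ uA u'A huu'.
    by move/pairwiseP: pw => /(_ (v i0) (pos u) (pos u')); rewrite !inE sw !posL; apply.
Qed.
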